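(* Let $T$ be a prae-dilator and let $(X,\iota_X,L_X)$ be a Bachmann-Howard system for $T$, and let $\vartheta_X:T_X\to\vartheta_T(X)$ be given by $\vartheta_X(\sigma)=\vartheta\sigma$. Then for all $\sigma,\tau\in T_X$: (i) if $\sigma<_{T_X}\tau$ and $[\iota_X]^{<\omega}(\operatorname{supp}^T_X(\sigma))<^{\operatorname{fin}}_{\vartheta_T(X)}\vartheta_X(\tau)$, then $\vartheta_X(\sigma)<_{\vartheta_T(X)}\vartheta_X(\tau)$; (ii) $[\iota_X]^{<\omega}(\operatorname{supp}^T_X(\sigma))<^{\operatorname{fin}}_{\vartheta_T(X)}\vartheta_X(\sigma)$.
   Context: The finite subset functor $[\cdot]^{<\omega}$ sends a set $X$ to the set of its finite subsets and a function $f$ to $[f]^{<\omega}(a)=\{f(x)\mid x\in a\}$; subsets of linear orders are regarded as suborders. A prae-dilator consists of an endofunctor $X\mapsto T_X$ on the category of linear orders (morphisms: order embeddings) and a natural transformation $\operatorname{supp}^T:T\Rightarrow[\cdot]^{<\omega}$ such that for every linear order $X$ and every $\sigma\in T_X$ we have $\sigma\in\operatorname{rng}(T_{\iota_\sigma})$, where $\iota_\sigma:\operatorname{supp}^T_X(\sigma)\hookrightarrow X$ is the inclusion. For a linear order $Z$ and finite $a,b\subseteq Z$ write $a<^{\operatorname{fin}}_Z b$ iff for every $s\in a$ there is $t\in b$ with $s<_Z t$; $\leq^{\operatorname{fin}}_Z$ is defined analogously with $\leq_Z$; singletons $\{s\}$ are written $s$. For a linear order $X$ let $\vartheta_T(X)$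 be the set of formal terms $\vartheta\sigma$ with $\sigma\in T_X$. A Bachmann-Howard system (for $T$) is a triple $(X,\iota_X,L_X)$ with $X$ a linear order, $\iota_X:X\to\vartheta_T(X)$ and $L_X:X\to\omega$ functions, such that $L_{\vartheta_T(X)}\circ\iota_X=L_X$, where $L_{\vartheta_T(X)}(\vartheta\sigma):=\max\{L_X(x)\mid x\in\operatorname{supp}^T_X(\sigma)\}+1$ (maximum of the empty set is $0$). For such a system the linear order $\vartheta\sigma<_{\vartheta_T(X)}\vartheta\tau$ is defined by recursion on $L_{\vartheta_T(X)}(\vartheta\sigma)+L_{\vartheta_T(X)}(\vartheta\tau)$ to hold iff either (a) $\sigma<_{T_X}\tau$ and $[\iota_X]^{<\omega}(\operatorname{supp}^T_X(\sigma))<^{\operatorname{fin}}_{\vartheta_T(X)}\vartheta\tau$, or (b) $\tau<_{T_X}\sigma$ and $\vartheta\sigma\leq^{\operatorname{fin}}_{\vartheta_T(X)}[\iota_X]^{<\omega}(\operatorname{supp}^T_X(\tau))$. *)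

(* Defs.v *)
From Stdlib Require Import List Arith Wf_nat PeanoNat ProofIrrelevance.
Import ListNotations.

Set Implicit Arguments.

Record LinOrd := {
  carrier :> Type;
  lt : carrier -> carrier -> Prop;
  lt_irrefl : forall x, ~ lt x x;
  lt_trans : forall x y z, lt x y -> lt y z -> lt x z;
  lt_total : forall x y, lt x y \/ x = y \/ lt y x
}.
Arguments lt {l} _ _.

Record Emb (X Y : LinOrd) := {
  emb :> X -> Y;
  emb_lt : forall x y, lt x y <-> lt (emb x) (emb y)
}.

Definition emb_id (X : LinOrd) : Emb X X :=
  {| emb := fun x => x; emb_lt := fun x y => iff_refl _ |}.

Definition emb_comp (X Y Z : LinOrd) (g : Emb Y Z) (f : Emb X Y) : Emb X Z.
Proof.
  refine {| emb := fun x => g (f x) |}.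
  intros x y. rewrite (emb_lt f x y). apply (emb_lt g).
Defined.

Definition subOrd (X : LinOrd) (P : X -> Prop) : LinOrd.
Proof.
  refine {| carrier := {x : X | P x};
            lt := fun a b => lt (proj1_sig a) (proj1_sig b) |}.
  - intros [x px]; apply lt_irrefl.
  - intros [x px] [y py] [z pz]; apply lt_trans.
  - intros [x px] [y py]; simpl.
    destruct (lt_total X x y) as [h | [h | h]]; auto.
    right; left; subst y; f_equal; apply proof_irrelevance.
Defined.

Definition incl_emb (X : LinOrd) (P : X -> Prop) : Emb (subOrd X P) X :=
  {| emb := fun a : subOrd X P => proj1_sig a; emb_lt := fun a b => iff_refl _ |}.

(** Prae-dilators. Finite subsets of X are represented by lists over X
    (read as the set of their members); naturality of supp is stated as
    equality of the represented sets. *)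
Record PraeDilator := {
  Tobj : LinOrd -> LinOrd;
  Tmor : forall X Y : LinOrd, Emb X Y -> Emb (Tobj X) (Tobj Y);
  Tmor_id : forall (X : LinOrd) (x : Tobj X), Tmor (emb_id X) x = x;
  Tmor_comp : forall (X Y Z : LinOrd) (f : Emb X Y) (g : Emb Y Z) (x : Tobj X),
      Tmor (emb_comp g f) x = Tmor g (Tmor f x);
  supp : forall X : LinOrd, Tobj X -> list X;
  supp_nat : forall (X Y : LinOrd) (f : Emb X Y) (s : Tobj X) (y : Y),
      In y (supp Y (Tmor f s)) <-> In y (map f (supp X s));
  supp_cond : forall (X : LinOrd) (s : Tobj X),
      exists s0 : Tobj (subOrd X (fun x => In x (supp X s))),
        Tmor (incl_emb X (fun x => In x (supp X s))) s0 = s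
}.
Arguments Tmor p {X Y} _.
Arguments supp p {X} _.

Inductive ThetaT (T : PraeDilator) (X : LinOrd) : Type :=
| vartheta : Tobj T X -> ThetaT T X.
Arguments vartheta {T X} _.

Definition varthetaX (T : PraeDilator) (X : LinOrd) (s : Tobj T X) : ThetaT T X :=
  vartheta s.
Arguments varthetaX {T X} _.

Definition Lth (T : PraeDilator) (X : LinOrd) (L : X -> nat) (a : ThetaT T X) : nat :=
  match a with vartheta s => S (fold_right Nat.max 0 (map L (supp T s))) end.

Definition BHSystem (T : PraeDilator) (X : LinOrd)
  (iota : X -> ThetaT T X) (L : X -> nat) : Prop :=
  forall x, Lth L (iota x) = L x.

Definition fin_rel (A : Type) (R : A -> A -> Prop) (a b : list A) : Prop :=
  forall s, In s a -> exists t, In t b /\ R s t.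

Section ThetaOrder.
Variables (T : PraeDilator) (X : LinOrd) (iota : X -> ThetaT T X) (L : X -> nat).

Definition th_measure (p : ThetaT T X * ThetaT T X) : nat :=
  Lth L (fst p) + Lth L (snd p).

(* One step of the recursion on L(vartheta sigma) + L(vartheta tau).
   Recursive calls are made only on pairs of strictly smaller measure
   (which, for a Bachmann-Howard system, is always the case). *)
Definition th_step (p : ThetaT T X * ThetaT T X)
  (rec : forall q, th_measure q < th_measure p -> Prop) : Prop :=
  let rec' q := match lt_dec (th_measure q) (th_measure p) with
                | left h => rec q h
                | right _ => False
                end in
  let '(a, b) := p in
  match a, b with
  | vartheta s, vartheta t =>
      (lt s t /\ forall x, In x (supp T s) -> rec' (iota x, vartheta t))
      \/
      (lt t s /\ exists y, In y (supp T t) /\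
                   (rec' (vartheta s, iota y) \/ vartheta s = iota y))
  end.

Definition theta_lt (a b : ThetaT T X) : Prop :=
  Fix (well_founded_ltof _ th_measure) (fun _ => Prop) th_step (a, b).

End ThetaOrder.

(* Main.v *)
Require Import Defs.
From Stdlib Require Import List Arith Lia Wf_nat FunctionalExtensionality.
Import ListNotations.

Section P.
Variables (T : PraeDilator) (X : LinOrd) (iota : X -> ThetaT T X) (L : X -> nat).

Lemma th_fix_eq (p : ThetaT T X * ThetaT T X) :
  Fix (well_founded_ltof _ (th_measure L)) (fun _ => Prop) (th_step iota L) p =
  th_step iota L p (fun q _ => Fix (well_founded_ltof _ (th_measure L)) (fun _ => Prop) (th_step iota L) q).
Proof.
  refine (@Fix_eq _ _ (well_founded_ltof _ (th_measure L)) (fun _ => Prop) (th_step iota L) _ p).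
  intros x f g H.
  assert (E : f = g).
  { apply functional_extensionality_dep; intro y.
    apply functional_extensionality_dep; intro h. apply H. }
  subst; reflexivity.
Qed.

Lemma th_intro1 s t :
  lt s t ->
  (forall x, In x (supp T s) ->
     th_measure L (iota x, vartheta t) < th_measure L (vartheta s, vartheta t) /\
     theta_lt iota L (iota x) (vartheta t)) ->
  theta_lt iota L (vartheta s) (vartheta t).
Proof.
  intros Hst H. unfold theta_lt. rewrite th_fix_eq. simpl. left. split; [exact Hst|].
  intros x Hx. destruct (H x Hx) as [Hm Hl].
  destruct (lt_dec _ _) as [h|h]; [|contradiction]. exact Hl.
Qed.

Lemma th_intro2 s t y :
  lt t s -> In y (supp T t) ->
  ((th_measure L (vartheta s, iota y) < th_measure L (vartheta s, vartheta t) /\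
    theta_lt iota L (vartheta s) (iota y)) \/ vartheta s = iota y) ->
  theta_lt iota L (vartheta s) (vartheta t).
Proof.
  intros Hts Hy H. unfold theta_lt. rewrite th_fix_eq. simpl. right. split; [exact Hts|].
  exists y. split; [exact Hy|].
  destruct H as [[Hm Hl]|He]; [left|right; exact He].
  destruct (lt_dec _ _) as [h|h]; [|contradiction]. exact Hl.
Qed.

Hypothesis HBH : BHSystem iota L.

Lemma max_in (l : list X) x : In x l -> L x <= fold_right Nat.max 0 (map L l).
Proof.
  induction l as [|a l IH]; simpl; [tauto|]. intros [->|H]; [lia|]. specialize (IH H); lia.
Qed.

Lemma L_supp s x : In x (supp T s) -> L x < Lth L (vartheta s).
Proof. intro H. simpl. pose proof (max_in _ _ H). lia. Qed.

Inductive Desc : Tobj T X -> X -> Prop :=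
| D0 : forall s z, In z (supp T s) -> Desc s z
| D1 : forall s x r z, In x (supp T s) -> iota x = vartheta r -> Desc r z -> Desc s z.

Lemma Desc_L s z : Desc s z -> L z < Lth L (vartheta s).
Proof.
  induction 1 as [s z H|s x r z Hx Hr Hd IH].
  - apply L_supp; auto.
  - pose proof (L_supp _ _ Hx). pose proof (HBH x) as E. rewrite Hr in E. lia.
Qed.

Lemma Desc_ext s z q w : Desc s z -> iota z = vartheta q -> In w (supp T q) -> Desc s w.
Proof.
  induction 1 as [s z H|s x r z Hx Hr Hd IH]; intros Hq Hw.
  - eapply D1; eauto. apply D0; auto.
  - eapply D1; eauto.
Qed.

Lemma main_claim n : forall s z, L z + Lth L (vartheta s) <= n -> Desc s z ->
  theta_lt iota L (iota z) (vartheta s).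
Proof.
  induction n as [n IH] using lt_wf_ind. intros s z Hn Hd.
  pose proof (Desc_L _ _ Hd) as HLz.
  destruct (iota z) as [q] eqn:Hq.
  assert (HLq : Lth L (vartheta q) = L z) by (rewrite <- Hq; apply HBH).
  destruct (lt_total _ q s) as [h|[h|h]].
  - apply th_intro1; [exact h|]. intros w Hw.
    assert (HLw : L w < L z) by (rewrite <- HLq; apply L_supp; auto).
    split; [unfold th_measure; simpl fst; simpl snd; rewrite HBH; lia|].
    apply (IH (L w + Lth L (vartheta s))); [lia|lia|].
    eapply Desc_ext; eauto.
  - subst q. lia.
  - destruct Hd as [s z H|s x r z Hx Hr Hd].
    + eapply th_intro2; [exact h|exact H|]. right. symmetry; exact Hq.
    + eapply th_intro2; [exact h|exact Hx|]. left.
      pose proof (L_supp _ _ Hx) as HLx.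
      pose proof (Desc_L _ _ Hd) as HLzr.
      assert (HLr : Lth L (vartheta r) = L x) by (rewrite <- Hr; apply HBH).
      split; [unfold th_measure; simpl fst; simpl snd; rewrite HBH; lia|].
      rewrite Hr, <- Hq.
      apply (IH (L z + Lth L (vartheta r))); [lia|lia|exact Hd].
Qed.

End P.

Theorem proposition3p6 (T : PraeDilator) (X : LinOrd)
  (iota : X -> ThetaT T X) (L : X -> nat) (HBH : BHSystem iota L) :
  (forall s t : Tobj T X,
      lt s t ->
      fin_rel (theta_lt iota L) (map iota (supp T s)) [varthetaX t] ->
      theta_lt iota L (varthetaX s) (varthetaX t))
  /\
  (forall s : Tobj T X,
      fin_rel (theta_lt iota L) (map iota (supp T s)) [varthetaX s]).
Proof.
  split.
  - intros s t Hst Hf. unfold varthetaX. apply th_intro1; [exact Hst|].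
    intros x Hx. destruct (Hf (iota x)) as [u [Hu Hl]].
    { apply in_map; auto. }
    destruct Hu as [<-|[]]. split; [|exact Hl].
    unfold th_measure; simpl fst; simpl snd. rewrite HBH.
    pose proof (@L_supp _ _ L _ _ Hx). lia.
  - intros s a Ha. apply in_map_iff in Ha. destruct Ha as [x [<- Hx]].
    exists (varthetaX s). split; [left; reflexivity|].
    apply (@main_claim _ _ _ _ HBH (L x + Lth L (vartheta s))); [lia|].
    apply D0; auto.
Qed.
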